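(* There is an absolute constant $C>0$ such that the following holds. Let $p\ge3$, $\mu>0$, $b,y\in\mathbb{R}^n$, and define $h:\mathbb{R}^n\to\mathbb{R}$ by $h(x)=\sum_{i=1}^n|x_i-b_i|^p+\mu\|x-y\|_2^2$. Then for every $x$ at which $h$ is thrice differentiable (all $x$ if $p>3$; all $x$ with $x_i\ne b_i$ for every $i$ if $p=3$) and all $u,w\in\mathbb{R}^n$, $$|\nabla^3 h(x)[u,u,w]|\le C\,p\,\mu^{-1/(p-2)}\,\|w\|_2\,u^\top\nabla^2 h(x)u.$$ *)

(* Defs.v *)
From Stdlib Require Import Reals Lra.
Open Scope R_scope.

(* Vectors of R^n are represented as functions nat -> R; only the
   coordinates 0..n-1 are relevant. *)
Fixpoint rsum (n : nat) (f : nat -> R) : R :=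
  match n with
  | O => 0
  | S m => rsum m f + f m
  end.

Definition norm2 (n : nat) (w : nat -> R) : R := sqrt (rsum n (fun i => w i ^ 2)).

(* a^p for a >= 0 and real p > 0, with the convention 0^p = 0. *)
Definition rpow (a p : R) : R := if Rle_dec a 0 then 0 else Rpower a p.

Definition hfun (n : nat) (p mu : R) (b y : nat -> R) (x : nat -> R) : R :=
  rsum n (fun i => rpow (Rabs (x i - b i)) p) + mu * rsum n (fun i => (x i - y i) ^ 2).

Definition vadd_s (x : nat -> R) (t : R) (v : nat -> R) : nat -> R :=
  fun i => x i + t * v i.

(* second_dir f x u l : l is the second directional derivative
   d^2/ds^2 f(x + s u) at s = 0, i.e. l = D^2 f(x)[u,u]. *)
Definition second_dir (f : (nat -> R) -> R) (x u : nat -> R) (l : R) : Prop :=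
  exists d1 : R -> R,
    (exists eps, 0 < eps /\ forall s, Rabs s < eps ->
        derivable_pt_lim (fun r => f (vadd_s x r u)) s (d1 s)) /\
    derivable_pt_lim d1 0 l.

(* third_dir f x u w l : l = d/dt [ D^2 f(x + t w)[u,u] ] at t = 0,
   i.e. l = D^3 f(x)[u,u,w]. *)
Definition third_dir (f : (nat -> R) -> R) (x u w : nat -> R) (l : R) : Prop :=
  exists g : R -> R,
    (exists eps, 0 < eps /\ forall t, Rabs t < eps -> second_dir f (vadd_s x t w) u (g t)) /\
    derivable_pt_lim g 0 l.

(* Main.v *)
Require Import Defs.
From Stdlib Require Import Reals Lra Lia.
Open Scope R_scope.

Definition E (q t : R) : R := rpow (Rabs t) q.
Definition sg (t : R) : R := if Rlt_dec t 0 then -1 else 1.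
Definition O (q t : R) : R := sg t * E q t.

Lemma der_val f x l l' : derivable_pt_lim f x l -> l = l' -> derivable_pt_lim f x l'.
Proof. intros H ->; exact H. Qed.

Lemma aff f a c d s L : derivable_pt_lim f (a + s*c - d) L ->
  derivable_pt_lim (fun r => f (a + r*c - d)) s (L*c).
Proof.
  intro H.
  assert (H1 : derivable_pt_lim (fun r => a + r*c - d) s c).
  { intros eps Heps. exists (mkposreal 1 Rlt_0_1). intros h hn _.
    replace ((a + (s+h)*c - d - (a + s*c - d))/h - c) with 0 by (field; auto).
    rewrite Rabs_R0; exact Heps. }
  exact (derivable_pt_lim_comp _ f s c L H1 H).
Qed.

Lemma scal_der f a c z L : derivable_pt_lim f z L ->
  derivable_pt_lim (fun t => a * f t * c) z (a * L * c).
Proof.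
  intro H.
  pose proof (derivable_pt_lim_scal _ a z L H) as H1.
  pose proof (derivable_pt_lim_scal _ c z _ H1) as H2.
  eapply der_val.
  - eapply derivable_pt_lim_ext; [|exact H2]. intro t; unfold mult_real_fct; ring.
  - ring.
Qed.

Lemma Rpower_pos a q : 0 < Rpower a q.
Proof. unfold Rpower; apply exp_pos. Qed.

Lemma E_pos q t : 0 < t -> E q t = Rpower t q.
Proof. intro H; unfold E, rpow. rewrite Rabs_pos_eq by lra.
  destruct (Rle_dec t 0); [lra|auto]. Qed.
Lemma E_neg q t : t < 0 -> E q t = Rpower (-t) q.
Proof. intro H; unfold E, rpow. rewrite Rabs_left by lra.
  destruct (Rle_dec (-t) 0); [lra|auto]. Qed.
Lemma E_0 q : E q 0 = 0.
Proof. unfold E, rpow. rewrite Rabs_R0. destruct (Rle_dec 0 0); lra. Qed.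
Lemma sg_pos t : 0 < t -> sg t = 1.
Proof. intro; unfold sg; destruct (Rlt_dec t 0); lra. Qed.
Lemma sg_neg t : t < 0 -> sg t = -1.
Proof. intro; unfold sg; destruct (Rlt_dec t 0); lra. Qed.

Lemma pow_neg_der q t : t < 0 ->
  derivable_pt_lim (fun s => Rpower (-s) q) t (- (q * Rpower (-t) (q-1))).
Proof.
  intro Ht.
  assert (H1 : derivable_pt_lim (fun s => -s) t (-1)).
  { eapply derivable_pt_lim_ext; [|apply (derivable_pt_lim_opp id t 1 (derivable_pt_lim_id t))].
    intro; reflexivity. }
  pose proof (derivable_pt_lim_comp _ (fun s => Rpower s q) t (-1) _ H1
      (derivable_pt_lim_power (-t) q ltac:(lra))) as H2.
  eapply der_val; [exact H2|]. ring.
Qed.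

Lemma small_est q eps : 1 < q -> 0 < eps -> exists delta : posreal,
  forall h, h <> 0 -> Rabs h < delta -> Rpower (Rabs h) (q-1) < eps.
Proof.
  intros Hq He. exists (mkposreal _ (Rpower_pos eps (/(q-1)))).
  intros h hn hl; simpl in hl.
  assert (Hh : 0 < Rabs h) by (apply Rabs_pos_lt; auto).
  replace eps with (Rpower (Rpower eps (/(q-1))) (q-1)).
  - apply Rlt_Rpower_l; [lra| split; auto].
  - rewrite Rpower_mult. replace (/(q-1)*(q-1)) with 1 by (field; lra).
    apply Rpower_1; auto.
Qed.

Lemma abs_over q h : 1 < q -> h <> 0 -> Rabs (E q h / h) = Rpower (Rabs h) (q-1)
  /\ Rabs (O q h / h) = Rpower (Rabs h) (q-1).
Proof.
  intros Hq hn.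
  assert (Hh : 0 < Rabs h) by (apply Rabs_pos_lt; auto).
  assert (HE : E q h = Rpower (Rabs h) (q-1) * Rabs h).
  { unfold E, rpow. destruct (Rle_dec (Rabs h) 0); [lra|].
    replace q with ((q-1) + 1) at 1 by ring. rewrite Rpower_plus, Rpower_1; auto. }
  assert (Hs : Rabs (sg h) = 1).
  { unfold sg; destruct (Rlt_dec h 0); [rewrite Rabs_left by lra|rewrite Rabs_pos_eq by lra]; lra. }
  assert (A : Rabs (E q h / h) = Rpower (Rabs h) (q-1)).
  { rewrite HE. unfold Rdiv. rewrite !Rabs_mult, Rabs_inv, Rabs_Rabsolu.
    rewrite (Rabs_pos_eq (Rpower _ _)) by (left; apply Rpower_pos). field; lra. }
  split; auto.
  unfold O. unfold Rdiv. rewrite Rmult_assoc, Rabs_mult, Hs, Rmult_1_l. exact A.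
Qed.

Lemma E_der q t : (t <> 0 \/ 1 < q) -> derivable_pt_lim (E q) t (q * O (q-1) t).
Proof.
  intro H.
  destruct (Rtotal_order t 0) as [Hn|[Hz|Hp]].
  - apply (derivable_pt_lim_locally_ext (fun s => Rpower (-s) q) _ t (t-1) 0).
    + lra.
    + intros z Hz; rewrite E_neg; lra.
    + eapply der_val; [apply pow_neg_der; auto|].
      unfold O; rewrite sg_neg, E_neg; auto; ring.
  - subst t. destruct H as [H|Hq]; [lra|].
    intros eps He. destruct (small_est q eps Hq He) as [d Hd]. exists d.
    intros h hn hl. rewrite Rplus_0_l, E_0, Rminus_0_r.
    unfold O. rewrite E_0. replace (q * (sg 0 * 0)) with 0 by ring.
    rewrite Rminus_0_r. destruct (abs_over q h Hq hn) as [A _]. rewrite A. auto.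
  - apply (derivable_pt_lim_locally_ext (fun s => Rpower s q) _ t 0 (t+1)).
    + lra.
    + intros z Hz; rewrite E_pos; lra.
    + eapply der_val; [apply derivable_pt_lim_power; auto|].
      unfold O; rewrite sg_pos, E_pos; auto; ring.
Qed.

Lemma O_der q t : (t <> 0 \/ 1 < q) -> derivable_pt_lim (O q) t (q * E (q-1) t).
Proof.
  intro H.
  destruct (Rtotal_order t 0) as [Hn|[Hz|Hp]].
  - apply (derivable_pt_lim_locally_ext (fun s => -1 * Rpower (-s) q * 1) _ t (t-1) 0).
    + lra.
    + intros z Hz; unfold O; rewrite sg_neg, E_neg; lra.
    + eapply der_val; [apply scal_der, pow_neg_der; auto|].
      rewrite E_neg; auto; ring.
  - subst t. destruct H as [H|Hq]; [lra|].
    intros eps He. destruct (small_est q eps Hq He) as [d Hd]. exists d.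
    intros h hn hl. rewrite Rplus_0_l. unfold O at 2. rewrite E_0, !E_0.
    replace (sg 0 * 0) with 0 by ring. rewrite Rminus_0_r, Rmult_0_r, Rminus_0_r.
    destruct (abs_over q h Hq hn) as [_ A]. rewrite A. auto.
  - apply (derivable_pt_lim_locally_ext (fun s => Rpower s q) _ t 0 (t+1)).
    + lra.
    + intros z Hz; unfold O; rewrite sg_pos, E_pos; lra.
    + eapply der_val; [apply derivable_pt_lim_power; auto|].
      rewrite E_pos; auto.
Qed.

Lemma plus_der f g x a c : derivable_pt_lim f x a -> derivable_pt_lim g x c ->
  derivable_pt_lim (fun t => f t + g t) x (a + c).
Proof. intros H1 H2. exact (derivable_pt_lim_plus f g x a c H1 H2). Qed.

Lemma cmul_der f c x l : derivable_pt_lim f x l ->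
  derivable_pt_lim (fun t => c * f t) x (c * l).
Proof. intro H. exact (derivable_pt_lim_scal f c x l H). Qed.

Lemma rsum_der n (F : nat -> R -> R) (D : nat -> R) s :
  (forall i, (i < n)%nat -> derivable_pt_lim (F i) s (D i)) ->
  derivable_pt_lim (fun r => rsum n (fun i => F i r)) s (rsum n D).
Proof.
  induction n as [|m IH]; intro H; simpl.
  - exact (derivable_pt_lim_const 0 s).
  - apply plus_der; [apply IH; intros; apply H; lia | apply H; lia].
Qed.

Lemma rsum_ext n f g : (forall i, (i < n)%nat -> f i = g i) -> rsum n f = rsum n g.
Proof. induction n; intros H; simpl; [auto| rewrite IHn, H; auto; intros; apply H; lia]. Qed.

Definition L2 n p mu (b X u : nat -> R) :=
  rsum n (fun i => p*(p-1) * E (p-2) (X i - b i) * (u i * u i)) + mu * rsum n (fun i => 2 * u i * u i).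

Lemma second_ok n p mu b y X u : 3 <= p -> second_dir (hfun n p mu b y) X u (L2 n p mu b X u).
Proof.
  intro Hp.
  exists (fun s => rsum n (fun i => p * O (p-1) (X i + s*u i - b i) * u i)
                 + mu * rsum n (fun i => 2 * (X i + s * u i - y i) * u i)).
  split.
  - exists 1; split; [lra|]. intros s _. unfold hfun, vadd_s.
    apply plus_der.
    + apply (rsum_der n (fun i r => E p (X i + r * u i - b i))).
      intros i _. apply (aff (E p)). apply E_der. right; lra.
    + apply cmul_der. apply (rsum_der n (fun i r => (X i + r * u i - y i)^2)).
      intros i _. eapply der_val. apply (aff (fun z => z^2)).
      eapply der_val; [apply derivable_pt_lim_pow|]. reflexivity.
      simpl; ring.
  - unfold L2. apply plus_der.
    + apply (rsum_der n (fun i s => p * O (p-1) (X i + s*u i - b i) * u i)).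
      intros i _. eapply der_val.
      apply (scal_der (fun t => O (p-1) (X i + t*u i - b i))).
      apply (aff (O (p-1))). apply O_der. right; lra.
      replace (X i + 0 * u i - b i) with (X i - b i) by ring.
      replace (p-1-1) with (p-2) by ring. ring.
    + apply cmul_der. apply (rsum_der n (fun i s => 2 * (X i + s * u i - y i) * u i)).
      intros i _. eapply der_val.
      apply (scal_der (fun t => X i + t*u i - y i)).
      apply (aff (fun z => z)). apply derivable_pt_lim_id. ring.
Qed.

Definition L3 n p (b x u w : nat -> R) :=
  rsum n (fun i => p*(p-1) * ((p-2) * O (p-3) (x i - b i) * w i) * (u i * u i)).

Lemma third_ok n p mu b y x u w : 3 <= p ->
  (3 < p \/ (forall i, (i < n)%nat -> x i <> b i)) ->
  third_dir (hfun n p mu b y) x u w (L3 n p b x u w).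
Proof.
  intros Hp Hx.
  exists (fun t => L2 n p mu b (vadd_s x t w) u). split.
  - exists 1; split; [lra|]. intros; apply second_ok; auto.
  - unfold L2, L3, vadd_s.
    replace (rsum n (fun i => p*(p-1) * ((p-2) * O (p-3) (x i - b i) * w i) * (u i * u i)))
      with (rsum n (fun i => p*(p-1) * ((p-2) * O (p-3) (x i - b i) * w i) * (u i * u i)) + mu * 0) by ring.
    apply plus_der.
    + apply (rsum_der n (fun i t => p*(p-1) * E (p-2) (x i + t * w i - b i) * (u i * u i))).
      intros i Hi. apply scal_der. eapply der_val. apply (aff (E (p-2))).
      apply E_der.
      { destruct Hx as [H|H]; [right; lra| left; specialize (H i Hi); lra]. }
      replace (x i + 0 * w i - b i) with (x i - b i) by ring.
      replace (p-2-1) with (p-3) by ring. ring.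
    + apply cmul_der. exact (derivable_pt_lim_const _ 0).
Qed.

Lemma rpow_nonneg a q : 0 <= rpow a q.
Proof. unfold rpow; destruct (Rle_dec a 0); [lra| left; apply Rpower_pos]. Qed.

Lemma exp_sq k : 0 <= k -> (k+1)*(k+2) <= 4 * Rpower 3 k.
Proof.
  intro Hk.
  assert (H1 : exp k <= Rpower 3 k).
  { replace (exp k) with (Rpower (exp 1) k).
    - apply Rle_Rpower_l; [lra| split; [apply exp_pos| apply exp_le_3]].
    - unfold Rpower. rewrite ln_exp. f_equal; ring. }
  assert (H2 : (1 + k/2) * (1 + k/2) <= exp k).
  { assert (He : exp k = exp (k/2) * exp (k/2)) by (rewrite <- exp_plus; f_equal; field).
    rewrite He.
    pose proof (exp_ineq1_le (k/2)). apply Rmult_le_compat; lra. }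
  nra.
Qed.

Lemma core p mu r : 3 <= p -> 0 < mu -> 0 <= r ->
  (p-1)*(p-2)*rpow r (p-3) <= 12 * Rpower mu (-/(p-2)) * (p*(p-1)*rpow r (p-2) + 2*mu).
Proof.
  intros Hp Hmu Hr.
  set (m := Rpower mu (/(p-2))).
  assert (Hm : 0 < m) by apply Rpower_pos.
  assert (HM : Rpower mu (-/(p-2)) = / m) by (unfold m; apply Rpower_Ropp).
  rewrite HM.
  assert (Hm2 : Rpower m (p-3) * m = mu).
  { rewrite <- (Rpower_1 m) at 2 by auto. rewrite <- Rpower_plus. unfold m.
    rewrite Rpower_mult. replace (/(p-2) * (p-3+1)) with 1 by (field; lra).
    apply Rpower_1; auto. }
  assert (Hmi : 0 < / m) by (apply Rinv_0_lt_compat; auto).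
  destruct (Rle_dec r 0) as [Hr0|Hr0].
  - unfold rpow. destruct (Rle_dec r 0); [|lra]. nra.
  - assert (Hrp : 0 < r) by lra.
    unfold rpow. destruct (Rle_dec r 0); [lra|].
    set (R3 := Rpower r (p-3)).
    assert (HR3 : 0 < R3) by apply Rpower_pos.
    assert (HR2 : Rpower r (p-2) = R3 * r).
    { unfold R3. replace (p-2) with ((p-3)+1) by ring. rewrite Rpower_plus, Rpower_1; auto. }
    rewrite HR2.
    destruct (Rle_dec m (r*3)) as [Hc|Hc].
    + assert (Hz : 1 <= / m * r * 3).
      { replace 1 with (/m * m) by (field; lra). rewrite Rmult_assoc.
        apply Rmult_le_compat_l; lra. }
      set (z := / m * r * 3) in *.
      replace (12 * / m * (p * (p - 1) * (R3 * r) + 2 * mu))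
        with (4 * (p*(p-1)*R3) * z + 24 * (mu * / m)) by (unfold z; ring).
      assert (0 <= mu * / m) by (apply Rmult_le_pos; lra).
      assert (0 <= p*(p-1)*R3) by (apply Rmult_le_pos; [nra|lra]).
      assert (p*(p-1)*R3 <= p*(p-1)*R3 * z) by (rewrite <- (Rmult_1_r (p*(p-1)*R3)) at 1; apply Rmult_le_compat_l; lra).
      nra.
    + assert (Hb : R3 <= Rpower m (p-3) * / Rpower 3 (p-3)).
      { rewrite <- Rpower_Ropp.
        replace (Rpower 3 (- (p-3))) with (Rpower (/3) (p-3)).
        - rewrite Rpower_mult_distr by lra. apply Rle_Rpower_l; [lra|]. split; lra.
        - unfold Rpower. rewrite ln_Rinv by lra. f_equal; ring. }
      pose proof (exp_sq (p-3) ltac:(lra)) as Hs.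
      assert (H3 : 0 < Rpower 3 (p-3)) by apply Rpower_pos.
      assert (Hmk : 0 < Rpower m (p-3)) by apply Rpower_pos.
      assert (Hk : (p-1)*(p-2)*R3 <= 4 * Rpower m (p-3)).
      { apply Rle_trans with ((p-1)*(p-2) * (Rpower m (p-3) * / Rpower 3 (p-3))).
        - apply Rmult_le_compat_l; [nra|auto].
        - replace ((p-1)*(p-2) * (Rpower m (p-3) * / Rpower 3 (p-3)))
            with (Rpower m (p-3) * (((p-3)+1)*((p-3)+2)) * / Rpower 3 (p-3)) by ring.
          apply Rmult_le_reg_r with (Rpower 3 (p-3)); auto.
          rewrite Rmult_assoc, Rinv_l by lra. nra. }
      assert (Hmq : Rpower m (p-3) = mu * / m) by (rewrite <- Hm2; field; lra).
      assert (0 <= p*(p-1)*(R3*r)) by (apply Rmult_le_pos; [nra| nra]).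
      nra.
Qed.

Lemma rsum_abs_le n f g : (forall i, (i < n)%nat -> Rabs (f i) <= g i) ->
  Rabs (rsum n f) <= rsum n g.
Proof.
  induction n; intro H; simpl.
  - rewrite Rabs_R0; lra.
  - eapply Rle_trans; [apply Rabs_triang|].
    apply Rplus_le_compat; [apply IHn; intros; apply H; lia| apply H; lia].
Qed.

Lemma rsum_lin n K c f g : rsum n (fun i => K * (f i + c * g i)) = K * (rsum n f + c * rsum n g).
Proof. induction n; simpl; [ring| rewrite IHn; ring]. Qed.

Lemma rsum_nonneg n f : (forall i, (i < n)%nat -> 0 <= f i) -> 0 <= rsum n f.
Proof. induction n; intro H; simpl; [lra| apply Rplus_le_le_0_compat; [apply IHn; intros; apply H; lia| apply H; lia]]. Qed.

Lemma coord_le n w i : (i < n)%nat -> w i ^ 2 <= rsum n (fun j => w j ^ 2).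
Proof.
  induction n; intro Hi; [lia|]. cbn [rsum].
  destruct (Nat.eq_dec i n) as [->|Hne].
  - assert (0 <= rsum n (fun j => w j ^ 2)) by (apply rsum_nonneg; intros; apply pow2_ge_0). lra.
  - assert (w i ^ 2 <= rsum n (fun j => w j ^ 2)) by (apply IHn; lia). pose proof (pow2_ge_0 (w n)). lra.
Qed.

Lemma absw n w i : (i < n)%nat -> Rabs (w i) <= norm2 n w.
Proof.
  intro Hi. unfold norm2. rewrite <- sqrt_Rsqr_abs. apply sqrt_le_1_alt.
  rewrite Rsqr_pow2. apply coord_le; auto.
Qed.

Lemma E_nonneg q t : 0 <= E q t.
Proof. apply rpow_nonneg. Qed.

Lemma O_abs q t : Rabs (O q t) <= E q t.
Proof.
  unfold O. rewrite Rabs_mult, (Rabs_pos_eq (E q t)) by apply E_nonneg.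
  assert (Rabs (sg t) = 1).
  { unfold sg; destruct (Rlt_dec t 0); [rewrite Rabs_left by lra|rewrite Rabs_pos_eq by lra]; lra. }
  rewrite H; lra.
Qed.

Theorem lemma10 :
  exists C : R, 0 < C /\
    forall (n : nat) (p mu : R) (b y x u w : nat -> R),
      3 <= p -> 0 < mu ->
      (3 < p \/ (forall i, (i < n)%nat -> x i <> b i)) ->
      exists l2 l3 : R,
        second_dir (hfun n p mu b y) x u l2 /\
        third_dir (hfun n p mu b y) x u w l3 /\
        Rabs l3 <= C * p * Rpower mu (- / (p - 2)) * norm2 n w * l2.
Proof.
  exists 12. split; [lra|].
  intros n p mu b y x u w Hp Hmu Hx.
  exists (L2 n p mu b x u), (L3 n p b x u w).
  split; [apply second_ok; auto|]. split; [apply third_ok; auto|].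
  set (M := Rpower mu (- / (p - 2))).
  assert (HM : 0 < M) by apply Rpower_pos.
  set (N := norm2 n w).
  unfold L2, L3.
  rewrite <- rsum_lin.
  apply rsum_abs_le. intros i Hi.
  set (a := x i - b i).
  pose proof (core p mu (Rabs a) Hp Hmu (Rabs_pos a)) as Hc.
  fold M in Hc.
  change (rpow (Rabs a) (p-3)) with (E (p-3) a) in Hc.
  change (rpow (Rabs a) (p-2)) with (E (p-2) a) in Hc.
  pose proof (O_abs (p-3) a) as Ho.
  pose proof (absw n w i Hi) as Hw. fold N in Hw.
  pose proof (E_nonneg (p-3) a) as He3.
  set (uu := u i * u i).
  assert (Huu : 0 <= uu) by (unfold uu; nra).
  replace (p * (p - 1) * ((p - 2) * O (p - 3) a * w i) * uu)
    with ((p * uu * ((p-1)*(p-2))) * (O (p-3) a * w i)) by ring.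
  rewrite Rabs_mult, (Rabs_pos_eq (p*uu*((p-1)*(p-2)))) by (apply Rmult_le_pos; nra).
  rewrite Rabs_mult.
  assert (H1 : Rabs (O (p-3) a) * Rabs (w i) <= E (p-3) a * N).
  { apply Rmult_le_compat; auto using Rabs_pos. }
  apply Rle_trans with (p * uu * N * ((p-1)*(p-2)*E (p-3) a)).
  - replace (p * uu * N * ((p-1)*(p-2)*E (p-3) a)) with (p*uu*((p-1)*(p-2)) * (E (p-3) a * N)) by ring.
    apply Rmult_le_compat_l; [apply Rmult_le_pos; nra| auto].
  - assert (HN : 0 <= N) by (eapply Rle_trans; [apply Rabs_pos|exact Hw]).
    replace (12 * p * M * N * (p * (p - 1) * E (p - 2) a * uu + mu * (2 * u i * u i)))
      with (p * uu * N * (12 * M * (p * (p - 1) * E (p - 2) a + 2 * mu))) by (unfold uu; ring).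
    apply Rmult_le_compat_l; [apply Rmult_le_pos; [apply Rmult_le_pos|]; nra| auto].
Qed.
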